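(* $R(B_2,B_{10}) \ge 25$; that is, there exists a graph on $24$ vertices containing no copy of $B_2$ whose complement contains no copy of $B_{10}$.
   Context: For graphs $G,H$, the Ramsey number $R(G,H)$ is the smallest integer $N$ such that every red/blue coloring of the edges of $K_N$ contains a red copy of $G$ (as a subgraph, not necessarily induced) or a blue copy of $H$. The book $B_k$ is the graph on $k+2$ vertices consisting of an edge $uv$ together with $k$ further vertices, each adjacent exactly to $u$ and $v$. *)

(* Defs.v *)
From mathcomp Require Import all_boot.
Set Implicit Arguments. Unset Strict Implicit. Unset Printing Implicit Defensive.

Definition simple_graph (T : finType) (e : rel T) : Prop :=
  (forall x y, e x y = e y x) /\ (forall x, ~~ e x x).

Definition complement (T : finType) (e : rel T) : rel T :=
  fun x y => (x != y) && ~~ e x y.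

(* The graph e contains a copy of the book B_k (as a not necessarily induced
   subgraph): an edge uv and k further vertices each adjacent to both u and v. *)
Definition contains_book (T : finType) (e : rel T) (k : nat) : Prop :=
  exists u v : T, exists S : {set T},
    [/\ e u v, u \notin S, v \notin S, #|S| = k &
        forall w, w \in S -> e u w && e v w].

(* Main.v *)
Require Import Defs.
From mathcomp Require Import all_boot.

Definition L : seq (seq nat) := [:: [:: 1; 3; 10; 12; 13; 15; 19; 20; 23]; [:: 0; 2; 4; 6; 8; 16; 17; 19; 22]; [:: 1; 5; 7; 9; 10; 12; 13; 14; 23]; [:: 0; 5; 6; 9; 10; 11; 14; 16; 22]; [:: 1; 9; 10; 11; 15; 16; 18; 23]; [:: 2; 3; 8; 12; 19; 20; 21; 22]; [:: 1; 3; 7; 8; 9; 12; 18; 21; 23]; [:: 2; 6; 10; 11; 15; 16; 19; 20; 22]; [:: 1; 5; 6; 10; 11; 13; 14; 15; 20]; [:: 2; 3; 4; 6; 13; 15; 17; 19; 20]; [:: 0; 2; 3; 4; 7; 8; 17; 18; 21]; [:: 3; 4; 7; 8; 12; 13; 17; 19; 23]; [:: 0; 2; 5; 6; 11; 15; 16; 17; 18]; [:: 0; 2; 8; 9; 11; 16; 18; 21; 22]; [:: 2; 3; 8; 15; 16; 17; 18; 19; 23]; [:: 0; 4; 7; 8; 9; 12; 14; 21; 22]; [:: 1; 3; 4; 7; 12; 13; 14; 20; 21]; [:: 1; 9; 10; 11; 12; 14; 20; 21; 22]; [:: 4; 6; 10; 12; 13; 14; 19; 20; 22]; [:: 0; 1;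 5; 7; 9; 11; 14; 18; 21]; [:: 0; 5; 7; 8; 9; 16; 17; 18; 23]; [:: 5; 6; 10; 13; 15; 16; 17; 19; 23]; [:: 1; 3; 5; 7; 13; 15; 17; 18; 23]; [:: 0; 2; 4; 6; 11; 14; 20; 21; 22]].

Definition En (i j : nat) : bool := j \in nth [::] L i.
Definition Cn (i j : nat) : bool := (i != j) && ~~ En i j.
Definition E : rel 'I_24 := fun i j => En i j.

Lemma cardc n (p : pred nat) : #|[pred w : 'I_n | p w]| = count p (iota 0 n).
Proof.
rewrite -val_enum_ord count_map -size_filter cardE /enum_mem.
congr size; rewrite filter_predT; apply: eq_filter => x //.
Qed.

Lemma allc n (P : nat -> bool) : all P (iota 0 n) -> forall i : 'I_n, P i.
Proof. move/allP=> h i; apply: h; rewrite mem_iota /=; exact: ltn_ord. Qed.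

Arguments allc {n P}.

Lemma book_card (T : finType) (e : rel T) k :
  contains_book e k -> exists u v, e u v && (k <= #|[pred w | e u w && e v w]|).
Proof.
move=> [u [v [S [huv _ _ hS hw]]]]; exists u, v; rewrite huv /= -hS.
apply: subset_leq_card; apply/subsetP => w /hw; by [].
Qed.

Definition I24 := iota 0 24.

Lemma checkE : all (fun u => all (fun v => En u v ==>
  (count (fun w => En u w && En v w) I24 < 2)) I24) I24.
Proof. vm_compute. reflexivity. Qed.

Lemma checkC : all (fun u => all (fun v => Cn u v ==>
  (count (fun w => Cn u w && Cn v w) I24 < 10)) I24) I24.
Proof. vm_compute. reflexivity. Qed.

Lemma symE : all (fun u => all (fun v => (En u v == En v u) && ~~ En u u) I24) I24.
Proof. vm_compute. reflexivity. Qed.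

Theorem mainTheorem6 :
  exists e : rel 'I_24,
    simple_graph e /\ ~ contains_book e 2 /\ ~ contains_book (complement e) 10.
Proof.
exists E; split; [split|split].
- move=> x y; rewrite /E; move: (allc symE x) => /(allc) /(_ y) /andP [/eqP -> _]; done.
- move=> x; rewrite /E; move: (allc symE x) => /(allc) /(_ x) /andP [_ ->]; done.
- move/book_card=> [u [v /andP [h1 h2]]].
  move: (allc checkE u) => /allc /(_ v); rewrite [En u v]h1 implyTb.
  rewrite /I24 -(cardc _ (fun w => En u w && En v w)) ltnNge => /negP; apply; exact: h2.
- move/book_card=> [u [v /andP [h1 h2]]].
  have ce : forall a b : 'I_24, complement E a b = Cn a b.
    by move=> a b; rewrite /complement /Cn /E -val_eqE.
  move: (allc checkC u) => /allc /(_ v); rewrite -ce h1 implyTb.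
  rewrite /I24 -(cardc _ (fun w => Cn u w && Cn v w)) ltnNge.
  suff -> : #|[pred w : 'I_24 | Cn u w && Cn v w]| =
            #|[pred w | complement E u w && complement E v w]| by rewrite h2.
  by apply: eq_card => w; rewrite !inE /=.
Qed.
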